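(* Let $\chi:\mathbb{D}\to\mathbb{E}$ be a notion of structure on a fibration $q:\mathbb{E}\to\mathbb{B}$. The following are equivalent: (1) for every object $X$ of $\mathbb{E}$ the presheaf $\bar\chi_X$ on $\mathbb{B}/q(X)$ is representable; (2) $\operatorname{Cart}(\chi)$ has a right adjoint (i.e. $\chi$ is definable); (3) $\operatorname{Cart}(\chi)$ is comonadic.
   Context: All fibrations are cloven (chosen reindexing $\sigma^*X$ with cartesian $\bar\sigma:\sigma^*X\to X$). For a fibration $\mathbb{E}\to\mathbb{B}$, $\operatorname{Cart}(\mathbb{E})$ is the wide subcategory of cartesian morphisms; for a functor $\chi$ preserving cartesian morphisms, $\operatorname{Cart}(\chi)$ is its restriction. A notion of structure on a fibration $q:\mathbb{E}\to\mathbb{B}$ is a fibration $p:\mathbb{D}\to\mathbb{B}$ together with a functor $\chi:\mathbb{D}\to\mathbb{E}$ with $q\circ\chi=p$, preserving cartesian morphisms, such that $\operatorname{Cart}(\chi):\operatorname{Cart}(\mathbb{D})\to\operatorname{Cart}(\mathbb{E})$ is a discrete fibration. It is definable if $\operatorname{Cart}(\chi)$ has a right adjoint as an ordinary functor. For $X\in\mathbb{E}$, $\bar\chi_X$ is the presheaf on $\mathbb{B}/q(X)$ sending $\sigma:I\to q(X)$ to the set of objects $D$ of $\mathbb{D}$ with $\chi(D)=\sigma^*(X)$, with functorial action induced by the unique cartesian lifts in $\operatorname{Cart}(\chi)$. *)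

(* Defs.v *)
From Stdlib Require Import ProofIrrelevance.
Set Implicit Arguments.
Unset Strict Implicit.

Record Category := {
  ob :> Type;
  hom : ob -> ob -> Type;
  idm : forall a, hom a a;
  cmp : forall a b c, hom b c -> hom a b -> hom a c;
  cmp_idl : forall a b (f : hom a b), cmp (idm b) f = f;
  cmp_idr : forall a b (f : hom a b), cmp f (idm a) = f;
  cmp_assoc : forall a b c d (h : hom c d) (g : hom b c) (f : hom a b),
      cmp h (cmp g f) = cmp (cmp h g) f }.

Arguments hom {_} _ _.
Arguments idm {_} _.
Arguments cmp {_ _ _ _} _ _.

Record Functor (C D : Category) := {
  fob :> ob C -> ob D;
  fmap : forall a b, hom a b -> hom (fob a) (fob b);
  fmap_id : forall a, fmap (idm a) = idm (fob a);
  fmap_cmp : forall a b c (g : hom b c) (f : hom a b),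
      fmap (cmp g f) = cmp (fmap g) (fmap f) }.

Arguments fmap {_ _} _ {_ _} _.

Definition IdF (C : Category) : Functor C C.
Proof.
  refine {| fob := fun a => a; fmap := fun a b f => f |}; reflexivity.
Defined.

Definition CompF (C D E : Category) (G : Functor D E) (F : Functor C D) : Functor C E.
Proof.
  refine {| fob := fun a => G (F a); fmap := fun a b f => fmap G (fmap F f) |}.
  - intros a; rewrite !fmap_id; reflexivity.
  - intros a b c g f; rewrite !fmap_cmp; reflexivity.
Defined.

(* A morphism packaged with its domain and codomain: used to compare
   morphisms whose (co)domains are only propositionally equal. *)
Definition arr (C : Category) (a b : C) (f : hom a b) : {x : C & {y : C & hom x y}} :=
  existT _ a (existT _ b f).

Definition NatIso (C D : Category) (F G : Functor C D) : Prop :=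
  exists (al : forall x, hom (F x) (G x)) (be : forall x, hom (G x) (F x)),
    (forall a b (f : hom a b), cmp (fmap G f) (al a) = cmp (al b) (fmap F f)) /\
    (forall x, cmp (be x) (al x) = idm (F x) /\ cmp (al x) (be x) = idm (G x)).

Definition IsEquivalence (C D : Category) (F : Functor C D) : Prop :=
  exists G : Functor D C,
    NatIso (CompF G F) (IdF C) /\ NatIso (CompF F G) (IdF D).

Record IsAdjunction (C D : Category) (L : Functor C D) (R : Functor D C)
    (eta : forall c, hom c (R (L c))) (eps : forall d, hom (L (R d)) d) : Prop := {
  eta_nat : forall a b (f : hom a b),
      cmp (fmap R (fmap L f)) (eta a) = cmp (eta b) f;
  eps_nat : forall a b (g : hom a b),
      cmp g (eps a) = cmp (eps b) (fmap L (fmap R g));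
  tri_L : forall c, cmp (eps (L c)) (fmap L (eta c)) = idm (L c);
  tri_R : forall d, cmp (fmap R (eps d)) (eta (R d)) = idm (R d) }.

Arguments IsAdjunction {C D} L R eta eps.

Definition has_right_adjoint (C D : Category) (L : Functor C D) : Prop :=
  exists (R : Functor D C) (eta : forall c, hom c (R (L c)))
         (eps : forall d, hom (L (R d)) d), IsAdjunction L R eta eps.

Lemma sig_eq_hprop (A : Type) (P : A -> Prop) (x y : {a : A | P a}) :
  proj1_sig x = proj1_sig y -> x = y.
Proof.
  destruct x as [x px], y as [y py]; simpl; intros ->.
  f_equal; apply proof_irrelevance.
Qed.

(* Coalgebras for the comonad L R (counit eps, comultiplication L eta R) *)
Section Coalg.
Variables (C D : Category) (L : Functor C D) (R : Functor D C)
          (eta : forall c, hom c (R (L c))) (eps : forall d, hom (L (R d)) d).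

Definition coalg_ob : Type :=
  {d : D & {al : hom d (L (R d)) |
     cmp (eps d) al = idm d /\
     cmp (fmap L (eta (R d))) al = cmp (fmap L (fmap R al)) al}}.

Definition coalg_str (x : coalg_ob) : hom (projT1 x) (L (R (projT1 x))) :=
  proj1_sig (projT2 x).

Definition coalg_hom (x y : coalg_ob) : Type :=
  {f : hom (projT1 x) (projT1 y) |
     cmp (coalg_str y) f = cmp (fmap L (fmap R f)) (coalg_str x)}.

Lemma coalg_id_prf (x : coalg_ob) :
  cmp (coalg_str x) (idm (projT1 x)) = cmp (fmap L (fmap R (idm _))) (coalg_str x).
Proof. rewrite !fmap_id, cmp_idl, cmp_idr; reflexivity. Qed.

Lemma coalg_cmp_prf (x y z : coalg_ob) (g : coalg_hom y z) (f : coalg_hom x y) :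
  cmp (coalg_str z) (cmp (proj1_sig g) (proj1_sig f)) =
  cmp (fmap L (fmap R (cmp (proj1_sig g) (proj1_sig f)))) (coalg_str x).
Proof.
  destruct g as [g pg], f as [f pf]; simpl.
  rewrite cmp_assoc, pg, <- cmp_assoc, pf, cmp_assoc, !fmap_cmp; reflexivity.
Qed.

Definition Coalg : Category.
Proof.
  refine {| ob := coalg_ob; hom := coalg_hom;
            idm := fun x => exist _ (idm _) (coalg_id_prf x);
            cmp := fun x y z g f => exist _ (cmp (proj1_sig g) (proj1_sig f))
                                           (coalg_cmp_prf g f) |}.
  - intros a b f; apply sig_eq_hprop; simpl; apply cmp_idl.
  - intros a b f; apply sig_eq_hprop; simpl; apply cmp_idr.
  - intros a b c d h g f; apply sig_eq_hprop; simpl; apply cmp_assoc.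
Defined.

Hypothesis adj : IsAdjunction L R eta eps.

Lemma comparison_ob_prf (c : C) :
  cmp (eps (L c)) (fmap L (eta c)) = idm (L c) /\
  cmp (fmap L (eta (R (L c)))) (fmap L (eta c)) =
  cmp (fmap L (fmap R (fmap L (eta c)))) (fmap L (eta c)).
Proof.
  split; [apply (tri_L adj)|].
  rewrite <- !fmap_cmp, (eta_nat adj); reflexivity.
Qed.

Definition comparison_ob (c : C) : Coalg :=
  existT _ (L c) (exist _ (fmap L (eta c)) (comparison_ob_prf c)).

Lemma comparison_hom_prf (a b : C) (f : hom a b) :
  cmp (coalg_str (comparison_ob b)) (fmap L f) =
  cmp (fmap L (fmap R (fmap L f))) (coalg_str (comparison_ob a)).
Proof.
  unfold coalg_str; simpl. rewrite <- !fmap_cmp, (eta_nat adj); reflexivity.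
Qed.

Definition Comparison : Functor C Coalg.
Proof.
  refine {| fob := comparison_ob;
            fmap := fun a b f => exist _ (fmap L f) (comparison_hom_prf f) |}.
  - intros a; apply sig_eq_hprop; simpl; apply fmap_id.
  - intros a b c g f; apply sig_eq_hprop; simpl; apply fmap_cmp.
Defined.

End Coalg.

Definition comonadic (C D : Category) (L : Functor C D) : Prop :=
  exists (R : Functor D C) (eta : forall c, hom c (R (L c)))
         (eps : forall d, hom (L (R d)) d) (adj : IsAdjunction L R eta eps),
    IsEquivalence (Comparison adj).

Definition cartesian (E B : Category) (P : Functor E B) (Y X : E) (f : hom Y X) : Prop :=
  forall (Z : E) (g : hom Z X) (h : hom (P Z) (P Y)),
    cmp (fmap P f) h = fmap P g ->
    exists k : hom Z Y, (fmap P k = h /\ cmp f k = g) /\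
      forall k' : hom Z Y, fmap P k' = h -> cmp f k' = g -> k' = k.

Lemma cartesian_id (E B : Category) (P : Functor E B) (X : E) :
  cartesian P (idm X).
Proof.
  intros Z g h H. rewrite fmap_id, cmp_idl in H.
  exists g; split; [split; [symmetry; exact H| apply cmp_idl]|].
  intros k' _ Hk; rewrite cmp_idl in Hk; exact Hk.
Qed.

Lemma cartesian_cmp (E B : Category) (P : Functor E B) (W Y X : E)
  (f1 : hom Y X) (f2 : hom W Y) :
  cartesian P f1 -> cartesian P f2 -> cartesian P (cmp f1 f2).
Proof.
  intros c1 c2 Z g h H.
  rewrite fmap_cmp, <- cmp_assoc in H.
  destruct (c1 Z g _ H) as [k1 [[Pk1 fk1] u1]].
  destruct (c2 Z k1 h (eq_sym Pk1)) as [k2 [[Pk2 fk2] u2]].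
  exists k2; split; [split; [exact Pk2|]|].
  - rewrite <- cmp_assoc, fk2; exact fk1.
  - intros k' Pk' fk'.
    apply u2; [exact Pk'|].
    apply u1; [rewrite fmap_cmp, Pk'; reflexivity|].
    rewrite cmp_assoc; exact fk'.
Qed.

Record Fibration (E B : Category) := {
  fib :> Functor E B;
  reindex : forall (X : E) (I : B), hom I (fib X) -> E;
  clift : forall (X : E) (I : B) (s : hom I (fib X)), hom (reindex s) X;
  clift_cart : forall X I (s : hom I (fib X)), cartesian fib (clift s);
  clift_over : forall X I (s : hom I (fib X)), arr (fmap fib (clift s)) = arr s }.

Arguments reindex {_ _} _ {_ _} _.
Arguments clift {_ _} _ {_ _} _.

Definition CartCat (E B : Category) (P : Functor E B) : Category.
Proof.
  refine {| ob := ob E; hom := fun a b => {f : hom a b | cartesian P f};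
            idm := fun a => exist _ (idm a) (@cartesian_id _ _ P a);
            cmp := fun a b c g f => exist _ (cmp (proj1_sig g) (proj1_sig f))
                     (cartesian_cmp (proj2_sig g) (proj2_sig f)) |}.
  - intros a b f; apply sig_eq_hprop; simpl; apply cmp_idl.
  - intros a b f; apply sig_eq_hprop; simpl; apply cmp_idr.
  - intros a b c d h g f; apply sig_eq_hprop; simpl; apply cmp_assoc.
Defined.

Definition CartFunctor (D E B : Category) (p : Functor D B) (q : Functor E B)
  (chi : Functor D E)
  (H : forall a b (f : hom a b), cartesian p f -> cartesian q (fmap chi f)) :
  Functor (CartCat p) (CartCat q).
Proof.
  refine {| fob := fun a : CartCat p => (chi a : CartCat q);
            fmap := fun (a b : CartCat p) (f : @hom (CartCat p) a b) =>
                      exist _ (fmap chi (proj1_sig f)) (H _ _ _ (proj2_sig f)) |}.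
  - intros a; apply sig_eq_hprop; simpl; apply fmap_id.
  - intros a b c g f; apply sig_eq_hprop; simpl; apply fmap_cmp.
Defined.

Definition discrete_fibration (C D : Category) (F : Functor C D) : Prop :=
  forall (c : C) (d : D) (u : hom d (F c)),
    exists (c' : C) (v : hom c' c), arr (fmap F v) = arr u /\
      forall (c'' : C) (v' : hom c'' c), arr (fmap F v') = arr u ->
        existT (fun x => hom x c) c'' v' = existT (fun x => hom x c) c' v.

Record NotionOfStructure (B E D : Category) (q : Fibration E B) := {
  nfib : Fibration D B;
  chi : Functor D E;
  chi_over_ob : forall d : D, q (chi d) = nfib d;
  chi_over_hom : forall a b (f : hom a b),
      arr (fmap q (fmap chi f)) = arr (fmap nfib f);
  chi_cart : forall a b (f : hom a b),
      cartesian nfib f -> cartesian q (fmap chi f);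
  chi_discrete : discrete_fibration (CartFunctor chi_cart) }.

Arguments NotionOfStructure {B E} D q.
Arguments nfib {B E D q} n.
Arguments chi {B E D q} n.
Arguments chi_cart {B E D q} n a b f _.

Definition CartChi (B E D : Category) (q : Fibration E B)
  (N : NotionOfStructure D q) : Functor (CartCat (nfib N)) (CartCat q) :=
  CartFunctor (chi_cart N).

Section Presheaf.
Variables (B E D : Category) (q : Fibration E B) (N : NotionOfStructure D q)
          (X : E).

Definition slice_ob : Type := {I : B & hom I (q X)}.

Definition slice_hom (c c' : slice_ob) : Type :=
  {u : hom (projT1 c) (projT1 c') | cmp (projT2 c') u = projT2 c}.

Lemma slice_cmp_prf (c c' c'' : slice_ob) (g : slice_hom c' c'') (u : slice_hom c c') :
  cmp (projT2 c'') (cmp (proj1_sig g) (proj1_sig u)) = projT2 c.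
Proof.
  destruct g as [g pg], u as [u pu]; simpl.
  rewrite cmp_assoc, pg; exact pu.
Qed.

Definition slice_cmp (c c' c'' : slice_ob) (g : slice_hom c' c'') (u : slice_hom c c')
  : slice_hom c c'' := exist _ (cmp (proj1_sig g) (proj1_sig u)) (slice_cmp_prf g u).

Definition chibar (c : slice_ob) : Type :=
  {d : D | chi N d = reindex q (projT2 c)}.

(* Graph of the functorial action chibar_X(u) : chibar_X(c') -> chibar_X(c)
   for u : c -> c' : Dv is the domain of the (unique) cartesian lift in
   Cart(chi), with codomain Dw, of the canonical morphism
   w : sigma^* X -> tau^* X over u (tau-bar o w = sigma-bar). *)
Definition chibar_act (c c' : slice_ob) (u : slice_hom c c')
  (Dw : chibar c') (Dv : chibar c) : Prop :=
  exists w : hom (reindex q (projT2 c)) (reindex q (projT2 c')),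
    cmp (clift q (projT2 c')) w = clift q (projT2 c) /\
    arr (fmap q w) = arr (proj1_sig u) /\
    exists v : hom (proj1_sig Dv) (proj1_sig Dw),
      cartesian (nfib N) v /\ arr (fmap (chi N) v) = arr w.

Definition representable : Prop :=
  exists (R : slice_ob) (phi : forall c, slice_hom c R -> chibar c),
    (forall c (g g' : slice_hom c R), phi c g = phi c g' -> g = g') /\
    (forall c (y : chibar c), exists g, phi c g = y) /\
    (forall c c' (u : slice_hom c c') (g : slice_hom c' R),
        chibar_act u (phi c' g) (phi c (slice_cmp g u))).

End Presheaf.

Arguments representable {B E D q} N X.

(* Main.v *)
Require Import Defs.
From Stdlib Require Import ProofIrrelevance Eqdep IndefiniteDescription.
Set Implicit Arguments.
Unset Strict Implicit.


Section ArrLemmas.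
Variable C : Category.

Lemma arr_dom (a b a' b' : C) (f : hom a b) (f' : hom a' b') : arr f = arr f' -> a = a'.
Proof. intros H; exact (f_equal (@projT1 _ _) H). Qed.

Lemma arr_cod (a b a' b' : C) (f : hom a b) (f' : hom a' b') : arr f = arr f' -> b = b'.
Proof. intros H; exact (f_equal (fun s => projT1 (projT2 s)) H). Qed.

Lemma arr_inj (a b : C) (f f' : hom a b) : arr f = arr f' -> f = f'.
Proof. unfold arr; intros H; apply inj_pair2 in H; apply inj_pair2 in H; exact H. Qed.

Lemma arr_cmp (a b c a' b' c' : C) (f : hom a b) (g : hom b c) (f' : hom a' b') (g' : hom b' c') :
  arr f = arr f' -> arr g = arr g' -> arr (cmp g f) = arr (cmp g' f').
Proof.
  intros H1 H2. pose proof (arr_dom H1). pose proof (arr_cod H1). pose proof (arr_cod H2).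
  subst. apply arr_inj in H1. apply arr_inj in H2. subst. reflexivity.
Qed.

Lemma cast_hom (a b a' b' : C) (f : hom a' b') : a = a' -> b = b' ->
  exists f' : hom a b, arr f' = arr f.
Proof. intros; subst; exists f; reflexivity. Qed.

End ArrLemmas.

Lemma arr_fmap (C D : Category) (F : Functor C D) (a b a' b' : C) (f : hom a b) (f' : hom a' b') :
  arr f = arr f' -> arr (fmap F f) = arr (fmap F f').
Proof.
  intros H. pose proof (arr_dom H). pose proof (arr_cod H). subst.
  apply arr_inj in H; subst; reflexivity.
Qed.

Lemma arr_cart (E B : Category) (P : Functor E B) (a b a' b' : CartCat P)
  (f : @hom (CartCat P) a b) (f' : @hom (CartCat P) a' b') :
  @arr (CartCat P) a b f = @arr (CartCat P) a' b' f' <-> arr (proj1_sig f) = arr (proj1_sig f').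
Proof.
  split.
  - intros H. exact (f_equal (fun s : {x : CartCat P & {y : CartCat P & @hom (CartCat P) x y}} =>
       arr (proj1_sig (projT2 (projT2 s)))) H).
  - intros H. pose proof (arr_dom H). pose proof (arr_cod H). simpl in *. subst.
    apply arr_inj in H. f_equal. f_equal. apply sig_eq_hprop. exact H.
Qed.

Section CartLemmas.
Variables (E B : Category) (P : Functor E B).

Lemma cart_arr (a b a' b' : E) (f : hom a b) (f' : hom a' b') :
  arr f = arr f' -> cartesian P f' -> cartesian P f.
Proof.
  intros H. pose proof (arr_dom H). pose proof (arr_cod H). subst.
  apply arr_inj in H; subst; auto.
Qed.

Lemma cart_uniq (Y X W : E) (f : hom Y X) (k1 k2 : hom W Y) :
  cartesian P f -> cmp f k1 = cmp f k2 -> arr (fmap P k1) = arr (fmap P k2) -> k1 = k2.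
Proof.
  intros Hf H1 H2. apply arr_inj in H2.
  destruct (Hf W (cmp f k1) (fmap P k1)) as [k [_ u]].
  - rewrite fmap_cmp; reflexivity.
  - rewrite (u k1 eq_refl eq_refl). symmetry. apply u; auto.
Qed.

Lemma cart_lift (Y X Z : E) (f : hom Y X) (g : hom Z X) (a : B) (h : hom a (P Y)) :
  cartesian P f -> a = P Z -> arr (cmp (fmap P f) h) = arr (fmap P g) ->
  exists k : hom Z Y, arr (fmap P k) = arr h /\ cmp f k = g.
Proof.
  intros Hf Ha H. subst a. apply arr_inj in H.
  destruct (Hf Z g h H) as [k [[H1 H2] _]]. exists k. rewrite H1. auto.
Qed.

Lemma cart_cancel (W Y X : E) (f : hom Y X) (w : hom W Y) :
  cartesian P f -> cartesian P (cmp f w) -> cartesian P w.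
Proof.
  intros Hf Hfw Z g h H.
  destruct (Hfw Z (cmp f g) h) as [k [[Pk Ek] Uk]].
  { rewrite fmap_cmp, <- cmp_assoc, H, fmap_cmp. reflexivity. }
  exists k. split; [split; [exact Pk|]|].
  - apply (cart_uniq Hf). rewrite cmp_assoc; exact Ek.
    rewrite fmap_cmp, Pk, H; reflexivity.
  - intros k' Pk' Ek'. apply Uk; auto. rewrite <- cmp_assoc, Ek'. reflexivity.
Qed.

Lemma iso_cart (Y X : E) (f : hom Y X) (f' : hom X Y) :
  cmp f f' = idm X -> cmp f' f = idm Y -> cartesian P f.
Proof.
  intros H1 H2 Z g h H. exists (cmp f' g). split; [split|].
  - rewrite fmap_cmp, <- H, cmp_assoc, <- fmap_cmp, H2, fmap_id, cmp_idl. reflexivity.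
  - rewrite cmp_assoc, H1, cmp_idl; reflexivity.
  - intros k' _ Ek. rewrite <- Ek, cmp_assoc, H2, cmp_idl. reflexivity.
Qed.

End CartLemmas.

Definition UA (C D : Category) (L : Functor C D) (X : D) : Prop :=
  exists (R : C) (e : hom (L R) X), forall (c : C) (f : hom (L c) X),
    exists g : hom c R, cmp e (fmap L g) = f /\ forall g', cmp e (fmap L g') = f -> g' = g.

Lemma adj_UA (C D : Category) (L : Functor C D) :
  has_right_adjoint L -> forall X, UA L X.
Proof.
  intros [R [eta [eps adj]]] X. exists (R X), (eps X). intros c f.
  exists (cmp (fmap R f) (eta c)). split.
  - rewrite fmap_cmp, cmp_assoc, <- (eps_nat adj), <- cmp_assoc, (tri_L adj), cmp_idr. reflexivity.
  - intros g' H. subst f. rewrite fmap_cmp, <- cmp_assoc, (eta_nat adj), cmp_assoc,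
      (tri_R adj), cmp_idl. reflexivity.
Qed.

Section UAadj.
Variables (C D : Category) (L : Functor C D) (H : forall X, UA L X).

Definition UAs (X : D) : {R : C & {e : hom (L R) X | forall (c : C) (f : hom (L c) X),
    exists g : hom c R, cmp e (fmap L g) = f /\ forall g', cmp e (fmap L g') = f -> g' = g}}.
Proof.
  destruct (constructive_indefinite_description _ (H X)) as [R HR].
  destruct (constructive_indefinite_description _ HR) as [e He].
  exact (existT _ R (exist _ e He)).
Defined.

Definition Ro (X : D) : C := projT1 (UAs X).
Definition Re (X : D) : hom (L (Ro X)) X := proj1_sig (projT2 (UAs X)).
Lemma Ru (X : D) (c : C) (f : hom (L c) X) :
  exists g : hom c (Ro X), cmp (Re X) (fmap L g) = f /\ forall g', cmp (Re X) (fmap L g') = f -> g' = g.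
Proof. exact (proj2_sig (projT2 (UAs X)) c f). Qed.

Definition Rlift (X : D) (c : C) (f : hom (L c) X) : hom c (Ro X) :=
  proj1_sig (constructive_indefinite_description _ (Ru f)).
Lemma Rlift_spec (X : D) (c : C) (f : hom (L c) X) : cmp (Re X) (fmap L (Rlift f)) = f.
Proof. unfold Rlift; destruct constructive_indefinite_description as [g [Hg Hg2]]; exact Hg. Qed.
Lemma Rlift_uniq (X : D) (c : C) (f : hom (L c) X) g : cmp (Re X) (fmap L g) = f -> g = Rlift f.
Proof. unfold Rlift; destruct constructive_indefinite_description as [g0 [Hg0 Hg]]; simpl; auto. Qed.

Definition RF : Functor D C.
Proof.
  refine {| fob := Ro; fmap := fun a b (h : hom a b) => Rlift (cmp h (Re a)) |}.
  - intros a. symmetry. apply Rlift_uniq. rewrite fmap_id, cmp_idr, cmp_idl. reflexivity.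
  - intros a b c g f. symmetry. apply Rlift_uniq.
    rewrite fmap_cmp, cmp_assoc, Rlift_spec, <- cmp_assoc, Rlift_spec, cmp_assoc. reflexivity.
Defined.

Lemma UA_adj : has_right_adjoint L.
Proof.
  exists RF, (fun c => Rlift (idm (L c))), Re. split; simpl.
  - intros a b f. transitivity (Rlift (cmp (fmap L f) (idm (L a)))).
    + apply Rlift_uniq. rewrite fmap_cmp, cmp_assoc, Rlift_spec, <- cmp_assoc, Rlift_spec, cmp_idr. reflexivity.
    + symmetry. apply Rlift_uniq. rewrite fmap_cmp, cmp_assoc, Rlift_spec, cmp_idl, cmp_idr. reflexivity.
  - intros a b g. rewrite Rlift_spec. reflexivity.
  - intros c. apply Rlift_spec.
  - intros d. transitivity (Rlift (Re d)).
    + apply Rlift_uniq. rewrite fmap_cmp, cmp_assoc, Rlift_spec, <- cmp_assoc, Rlift_spec, cmp_idr. reflexivity.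
    + symmetry. apply Rlift_uniq. rewrite fmap_id, cmp_idr. reflexivity.
Qed.
End UAadj.

Section FFESO.
Variables (C D : Category) (F : Functor C D).
Hypothesis full : forall a b (h : hom (F a) (F b)), exists g, fmap F g = h.
Hypothesis faith : forall a b (g g' : hom a b), fmap F g = fmap F g' -> g = g'.
Hypothesis eso : forall d, exists c (i : hom (F c) d) (j : hom d (F c)),
  cmp j i = idm (F c) /\ cmp i j = idm d.

Definition Es (d : D) : {c : C & {i : hom (F c) d & {j : hom d (F c) |
  cmp j i = idm (F c) /\ cmp i j = idm d}}}.
Proof.
  destruct (constructive_indefinite_description _ (eso d)) as [c H1].
  destruct (constructive_indefinite_description _ H1) as [i H2].
  destruct (constructive_indefinite_description _ H2) as [j H3].
  exact (existT _ c (existT _ i (exist _ j H3))).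
Defined.
Definition Gc d := projT1 (Es d).
Definition Gi d : hom (F (Gc d)) d := projT1 (projT2 (Es d)).
Definition Gj d : hom d (F (Gc d)) := proj1_sig (projT2 (projT2 (Es d))).
Lemma Gji d : cmp (Gj d) (Gi d) = idm _. Proof. exact (proj1 (proj2_sig (projT2 (projT2 (Es d))))). Qed.
Lemma Gij d : cmp (Gi d) (Gj d) = idm _. Proof. exact (proj2 (proj2_sig (projT2 (projT2 (Es d))))). Qed.

Definition pre a b (h : hom (F a) (F b)) : hom a b :=
  proj1_sig (constructive_indefinite_description _ (full h)).
Lemma pre_spec a b (h : hom (F a) (F b)) : fmap F (pre h) = h.
Proof. unfold pre; destruct constructive_indefinite_description; auto. Qed.

Definition GF : Functor D C.
Proof.
  refine {| fob := Gc; fmap := fun a b (h : hom a b) => pre (cmp (Gj b) (cmp h (Gi a))) |}.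
  - intros a. apply faith. rewrite pre_spec, fmap_id, cmp_idl, Gji. reflexivity.
  - intros a b c g f. apply faith. rewrite fmap_cmp, !pre_spec.
    rewrite <- !cmp_assoc. f_equal. f_equal.
    rewrite (cmp_assoc (Gi b)), Gij, cmp_idl. reflexivity.
Defined.

Lemma ffeso_equiv : IsEquivalence F.
Proof.
  exists GF. split.
  - exists (fun c => pre (Gi (F c))), (fun c => pre (Gj (F c))). split.
    + intros a b f. simpl. apply faith. rewrite !fmap_cmp, !pre_spec.
      rewrite !cmp_assoc, Gij, cmp_idl. reflexivity.
    + intros x. split; apply faith; rewrite fmap_cmp, !pre_spec, fmap_id;
        [apply Gji | apply Gij].
  - exists Gi, Gj. split.
    + intros a b f. simpl. rewrite pre_spec, !cmp_assoc, Gij, cmp_idl. reflexivity.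
    + intros x. split; [apply Gji | apply Gij].
Qed.
End FFESO.

Lemma iso_of_eq (C : Category) (x y : C) : x = y ->
  exists (i : hom x y) (j : hom y x), cmp j i = idm x /\ cmp i j = idm y.
Proof. intros ->. exists (idm y), (idm y). split; apply cmp_idl. Qed.

Section Comon.
Variables (C D : Category) (L : Functor C D) (DF : discrete_fibration L).
Variables (R : Functor D C) (eta : forall c, hom c (R (L c)))
          (eps : forall d, hom (L (R d)) d) (adj : IsAdjunction L R eta eps).

Lemma DF_uniq (c c1 c2 : C) (v1 : hom c1 c) (v2 : hom c2 c) :
  arr (fmap L v1) = arr (fmap L v2) -> c1 = c2 /\ arr v1 = arr v2.
Proof.
  intros H. destruct (DF (fmap L v2)) as [c' [v [Hv U]]].
  pose proof (U c1 v1 H) as E1. pose proof (U c2 v2 eq_refl) as E2.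
  rewrite <- E2 in E1. split.
  - exact (f_equal (@projT1 _ _) E1).
  - exact (f_equal (fun s : {x : C & hom x c} => @arr C (projT1 s) c (projT2 s)) E1).
Qed.

Lemma adj_transpose c d (g : hom c (R d)) : g = cmp (fmap R (cmp (eps d) (fmap L g))) (eta c).
Proof.
  rewrite fmap_cmp, <- cmp_assoc, (eta_nat adj), cmp_assoc, (tri_R adj), cmp_idl. reflexivity.
Qed.

Lemma comonadic_of_adj : IsEquivalence (Comparison adj).
Proof.
  apply ffeso_equiv.
  - intros a b [h Hh]. unfold coalg_str in Hh; simpl in Hh.
    destruct (DF h) as [c0 [g0 [Hg0 _]]].
    assert (E : arr (fmap L (cmp (eta b) g0)) = arr (fmap L (cmp (fmap R h) (eta a)))).
    { rewrite !fmap_cmp. transitivity (arr (cmp (fmap L (eta b)) h)).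
      - apply arr_cmp; [exact Hg0|reflexivity].
      - exact (f_equal (@arr _ _ _) Hh). }
    destruct (DF_uniq E) as [e1 e2]. subst c0.
    exists g0. apply sig_eq_hprop. simpl. apply arr_inj. exact Hg0.
  - intros a b g g' H. apply (f_equal (@proj1_sig _ _)) in H. simpl in H.
    apply arr_inj. apply (DF_uniq (v1 := g) (v2 := g')). rewrite H. reflexivity.
  - intros [d [al [H1 H2]]].
    destruct (DF al) as [c' [v [Hv _]]].
    pose proof (arr_dom Hv) as Ed. simpl in Ed. subst d.
    apply arr_inj in Hv.
    assert (Ev : v = eta c').
    { rewrite (adj_transpose v), Hv, H1, fmap_id, cmp_idl. reflexivity. }
    subst v.
    exists c'. simpl.
    assert (EQ : comparison_ob adj c' = existT _ (L c') (exist _ al (conj H1 H2))).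
    { unfold comparison_ob. f_equal. apply sig_eq_hprop. simpl. exact Hv. }
    exact (@iso_of_eq (Coalg (L:=L) (R:=R) eta eps) _ _ EQ).
Qed.
End Comon.

Section Fib.
Variables (B E D : Category) (q : Fibration E B) (N : NotionOfStructure D q).
Let P : Functor D B := fib (nfib N).
Let Q : Functor E B := fib q.
Let X_ := chi N.

Lemma DFe (c : D) (d : E) (u : hom d (chi N c)) : cartesian q u ->
  exists c' (v : hom c' c), cartesian (nfib N) v /\ arr (fmap (chi N) v) = arr u /\
    forall c'' (v' : hom c'' c), cartesian (nfib N) v' -> arr (fmap (chi N) v') = arr u ->
      c'' = c' /\ arr v' = arr v.
Proof.
  intros Hu.
  destruct (@chi_discrete B E D q N _ _ (exist _ u Hu : @hom (CartCat q) d (chi N c)))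
    as [c' [[v Hv] [H1 H2]]].
  exists c', v. split; [exact Hv|]. split.
  - apply arr_cart in H1. exact H1.
  - intros c'' v' Hv' E'.
    assert (E3 : existT (fun x : CartCat (nfib N) => @hom (CartCat (nfib N)) x c) c'' (exist _ v' Hv')
               = existT _ c' (exist _ v Hv)).
    { apply (H2 c'' (exist _ v' Hv')). apply arr_cart. exact E'. }
    split.
    + exact (f_equal (@projT1 _ _) E3).
    + exact (f_equal (fun s : {x : CartCat (nfib N) & @hom (CartCat (nfib N)) x c} =>
               @arr D (projT1 s) c (proj1_sig (projT2 s))) E3).
Qed.

Lemma DFe_uniq (c c1 c2 : D) (v1 : hom c1 c) (v2 : hom c2 c) :
  cartesian (nfib N) v1 -> cartesian (nfib N) v2 ->
  arr (fmap (chi N) v1) = arr (fmap (chi N) v2) -> c1 = c2 /\ arr v1 = arr v2.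
Proof.
  intros H1 H2 H.
  destruct (DFe (chi_cart N _ _ _ H2)) as [c' [v [_ [_ U]]]].
  destruct (U _ _ H1 H) as [-> A1]. destruct (U _ _ H2 eq_refl) as [-> A2].
  split; [reflexivity| rewrite A1, A2; reflexivity].
Qed.

Definition UAe (X : E) : Prop :=
  exists (R : D) (e : hom (chi N R) X), cartesian q e /\
    forall (c : D) (f : hom (chi N c) X), cartesian q f ->
      exists g : hom c R, cartesian (nfib N) g /\ cmp e (fmap (chi N) g) = f /\
        forall g', cartesian (nfib N) g' -> cmp e (fmap (chi N) g') = f -> g' = g.

Lemma UA_UAe (X : E) : UA (CartChi N) X <-> UAe X.
Proof.
  split.
  - intros [R [[e He] U]]. exists R, e. split; [exact He|].
    intros c f Hf. destruct (U c (exist _ f Hf)) as [[g Hg] [E1 U1]].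
    apply (f_equal (@proj1_sig _ _)) in E1. simpl in E1.
    exists g. split; [exact Hg|]. split; [exact E1|].
    intros g' Hg' E2. 
    assert (E3 := U1 (exist _ g' Hg')). apply (f_equal (@proj1_sig _ _)) in E3. exact E3.
    apply sig_eq_hprop. exact E2.
  - intros [R [e [He U]]]. exists R, (exist _ e He). intros c [f Hf].
    destruct (U c f Hf) as [g [Hg [E1 U1]]].
    exists (exist _ g Hg). split.
    + apply sig_eq_hprop. exact E1.
    + intros [g' Hg'] E2. apply (f_equal (@proj1_sig _ _)) in E2. simpl in E2.
      apply sig_eq_hprop. simpl. apply U1; auto.
Qed.

End Fib.

Section Dir1.
Variables (B E D : Category) (q : Fibration E B) (N : NotionOfStructure D q) (X : E).
Variables (R : D) (e : hom (chi N R) X) (He : cartesian q e).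
Hypothesis U : forall (c : D) (f : hom (chi N c) X), cartesian q f ->
      exists g : hom c R, cartesian (nfib N) g /\ cmp e (fmap (chi N) g) = f /\
        forall g', cartesian (nfib N) g' -> cmp e (fmap (chi N) g') = f -> g' = g.

Definition Rs : slice_ob q X := existT _ (q (chi N R)) (fmap q e).

Definition Spec (c : slice_ob q X) (g : slice_hom c Rs) (d : chibar N c) : Prop :=
  exists w : hom (reindex q (projT2 c)) (chi N R),
    arr (fmap q w) = arr (proj1_sig g) /\ cmp e w = clift q (projT2 c) /\
    exists v : hom (proj1_sig d) R, cartesian (nfib N) v /\ arr (fmap (chi N) v) = arr w.

Lemma reidx_eq (I : B) (s : hom I (q X)) : q (reindex q s) = I.
Proof. exact (arr_dom (clift_over s)). Qed.

Lemma Spec_ex (c : slice_ob q X) (g : slice_hom c Rs) : exists d, @Spec c g d.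
Proof.
  destruct c as [I s]. destruct g as [u Hu]. simpl in *.
  destruct (cart_lift (Z := reindex q s) (g := clift q s) (h := u) He (eq_sym (reidx_eq s)))
    as [w [Ew1 Ew2]].
  { rewrite Hu. symmetry. apply clift_over. }
  assert (Hw : cartesian q w).
  { apply (cart_cancel He). rewrite Ew2. apply clift_cart. }
  destruct (DFe Hw) as [c' [v [Hv [Ev _]]]].
  exists (exist _ c' (arr_dom Ev)). exists w. split; [exact Ew1|]. split; [exact Ew2|].
  exists v. split; assumption.
Qed.

Definition phi (c : slice_ob q X) (g : slice_hom c Rs) : chibar N c := proj1_sig (constructive_indefinite_description _ (@Spec_ex c g)).
Lemma phi_spec (c : slice_ob q X) (g : slice_hom c Rs) : Spec g (phi g).
Proof. unfold phi. destruct constructive_indefinite_description; auto. Qed.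

Lemma Spec_inj c (g g' : slice_hom c Rs) d : Spec g d -> Spec g' d -> g = g'.
Proof.
  intros [w [Ew1 [Ew2 [v [Hv Ev]]]]] [w' [Ew1' [Ew2' [v' [Hv' Ev']]]]].
  assert (Hvv : v' = v).
  { destruct (U (cartesian_cmp He (chi_cart N _ _ _ Hv))) as [g0 [_ [_ U0]]].
    rewrite (U0 v' Hv'), (U0 v Hv); auto.
    apply arr_inj. transitivity (arr (cmp e w')). apply arr_cmp; auto.
    rewrite Ew2', <- Ew2. symmetry. apply arr_cmp; auto. }
  subst v'. 
  assert (Eww : arr w = arr w') by (rewrite <- Ev, Ev'; reflexivity).
  apply sig_eq_hprop. apply arr_inj. rewrite <- Ew1, <- Ew1'. apply arr_fmap. exact Eww.
Qed.

Lemma Rs_rep : representable N X.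
Proof.
  exists Rs, (@phi). split; [|split].
  - intros c g g' H. apply (Spec_inj (phi_spec g)). rewrite H. apply phi_spec.
  - intros [I s] [d Hd]. simpl in Hd.
    destruct (cast_hom (a := chi N d) (b := X) (clift q s) Hd eq_refl) as [f Ef].
    assert (Hf : cartesian q f) by (apply (cart_arr Ef); apply clift_cart).
    destruct (U Hf) as [g0 [Hg0 [Eg0 _]]].
    assert (EI : I = q (chi N d)) by (rewrite Hd; symmetry; apply reidx_eq).
    destruct (cast_hom (a := I) (b := q (chi N R)) (fmap q (fmap (chi N) g0)) EI eq_refl) as [u Eu].
    assert (Hu : cmp (fmap q e) u = s).
    { apply arr_inj. transitivity (arr (cmp (fmap q e) (fmap q (fmap (chi N) g0)))).
      apply arr_cmp; auto. rewrite <- fmap_cmp, Eg0. 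
      transitivity (arr (fmap q (clift q s))). apply arr_fmap; exact Ef. apply clift_over. }
    exists (exist _ u Hu : slice_hom (existT _ I s) Rs).
    destruct (phi_spec (exist _ u Hu : slice_hom (existT _ I s) Rs)) as [w [Ew1 [Ew2 [v [Hv Ev]]]]].
    simpl in *.
    destruct (cast_hom (a := reindex q s) (b := chi N R) (fmap (chi N) g0) (eq_sym Hd) eq_refl) as [w0 Ew0].
    assert (Ew0w : w0 = w).
    { apply (cart_uniq He).
      - apply arr_inj. rewrite Ew2. transitivity (arr (cmp e (fmap (chi N) g0))).
        apply arr_cmp; auto. rewrite Eg0. exact Ef.
      - transitivity (arr (fmap q (fmap (chi N) g0))). apply arr_fmap; auto.
        rewrite Ew1. symmetry; exact Eu. }
    subst w0.
    destruct (DFe_uniq Hv Hg0) as [Edd _].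
    { rewrite Ev. exact Ew0. }
    apply sig_eq_hprop. exact Edd.
  - intros [I s] [J t] [u0 Hu0] [g0 Hg0].
    destruct (phi_spec (exist _ g0 Hg0 : slice_hom (existT _ J t) Rs)) as [w1 [Ew1 [Ec1 [v1 [Hv1 Ev1]]]]].
    destruct (phi_spec (slice_cmp (exist _ g0 Hg0 : slice_hom (existT _ J t) Rs) (exist _ u0 Hu0 : slice_hom (existT _ I s) (existT _ J t))))
      as [w2 [Ew2 [Ec2 [v2 [Hv2 Ev2]]]]].
    simpl in *.
    destruct (cast_hom (a := I) (b := q (reindex q t)) u0 eq_refl (reidx_eq t)) as [h Eh].
    destruct (cart_lift (Z := reindex q s) (g := clift q s) (h := h) (clift_cart (f:=q) (s:=t)) (eq_sym (reidx_eq s)))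
      as [w [Ewq Ecw]].
    { transitivity (arr (cmp t u0)). apply arr_cmp; auto. apply clift_over.
      rewrite Hu0. symmetry; apply clift_over. }
    exists w. split; [exact Ecw|]. split; [transitivity (arr h); [exact Ewq|exact Eh]|].
    assert (Hw : cartesian q w).
    { apply (cart_cancel (clift_cart (f:=q) (s:=t))). rewrite Ecw. apply clift_cart. }
    set (d1 := phi (exist _ g0 Hg0 : slice_hom (existT _ J t) Rs)) in *.
    destruct (cast_hom (a := reindex q s) (b := chi N (proj1_sig d1)) w eq_refl (proj2_sig d1)) as [w' Ew'].
    assert (Hw' : cartesian q w') by (apply (cart_arr Ew'); exact Hw).
    destruct (DFe Hw') as [d3 [v3 [Hv3 [Ev3 _]]]].
    assert (Ew12 : cmp w1 w = w2).
    { apply (cart_uniq He).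
      - rewrite cmp_assoc, Ec1, Ecw, Ec2. reflexivity.
      - rewrite Ew2, fmap_cmp. apply arr_cmp; auto. rewrite Ewq; exact Eh. }
    destruct (DFe_uniq (cartesian_cmp Hv1 Hv3) Hv2) as [Ed Ea].
    { rewrite fmap_cmp, Ev2, <- Ew12. apply arr_cmp; auto. transitivity (arr w'); [exact Ev3|exact Ew']. }
    destruct (cast_hom (a := proj1_sig (phi (slice_cmp (exist _ g0 Hg0 : slice_hom (existT _ J t) Rs) (exist _ u0 Hu0 : slice_hom (existT _ I s) (existT _ J t)))))
                (b := proj1_sig d1) v3 (eq_sym Ed) eq_refl) as [v Evv].
    exists v. split.
    + apply (cart_arr Evv); exact Hv3.
    + transitivity (arr (fmap (chi N) v3)). apply arr_fmap; auto. transitivity (arr w'); [exact Ev3|exact Ew'].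
Qed.
End Dir1.

Lemma arr_id_eq (C : Category) (a a' : C) : a = a' -> arr (idm a) = arr (idm a').
Proof. intros ->; reflexivity. Qed.

Section Dir2.
Variables (B E D : Category) (q : Fibration E B) (N : NotionOfStructure D q).

Lemma DFe_iso (c c' : D) (d : E) (v : hom c' c) (u : hom d (chi N c)) (u' : hom (chi N c) d) :
  cartesian (nfib N) v -> arr (fmap (chi N) v) = arr u ->
  cmp u u' = idm _ -> cmp u' u = idm _ ->
  exists v' : hom c c', cartesian (nfib N) v' /\ cmp v v' = idm c /\ cmp v' v = idm c'.
Proof.
  intros Hv Ev H1 H2. pose proof (arr_dom Ev) as Ed. subst d. apply arr_inj in Ev. subst u.
  assert (Hu' : cartesian q u') by (apply (iso_cart H2 H1)).
  destruct (DFe Hu') as [c'' [v'' [Hv'' [Ev'' _]]]].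
  destruct (DFe_uniq (cartesian_cmp Hv Hv'') (@cartesian_id _ _ (nfib N) c)) as [Ec Ea].
  { rewrite fmap_cmp, fmap_id, <- H1. apply arr_cmp; auto. }
  subst c''. apply arr_inj in Ea. apply arr_inj in Ev''. subst u'.
  exists v''. split; [exact Hv''|]. split; [exact Ea|].
  destruct (DFe_uniq (cartesian_cmp Hv'' Hv) (@cartesian_id _ _ (nfib N) c')) as [_ Eb].
  { rewrite fmap_cmp, fmap_id, H2. reflexivity. }
  apply arr_inj in Eb. exact Eb.
Qed.

Variable (X : E).
Hypothesis Hrep : representable N X.

Lemma rep_UAe : UAe N X.
Proof.
  destruct Hrep as [[I0 rho] [phi [Inj [Surj Nat]]]].
  set (Rs := existT _ I0 rho : slice_ob q X) in *.
  set (ids := exist _ (idm I0) (cmp_idr rho) : slice_hom Rs Rs).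
  assert (Eids : forall c (g : slice_hom c Rs), slice_cmp ids g = g).
  { intros c g. apply sig_eq_hprop. simpl. apply cmp_idl. }
  set (R := proj1_sig (phi Rs ids)).
  assert (HR : chi N R = reindex q rho) by exact (proj2_sig (phi Rs ids)).
  destruct (cast_hom (a := chi N R) (b := X) (clift q rho) HR eq_refl) as [e Ee].
  assert (He : cartesian q e) by (apply (cart_arr Ee); apply clift_cart).
  exists R, e. split; [exact He|].
  intros c f Hf.
  set (sl := existT _ (q (chi N c)) (fmap q f) : slice_ob q X).
  destruct (cart_lift (Z := reindex q (fmap q f)) (g := clift q (fmap q f)) (h := idm (q (chi N c)))
              Hf (eq_sym (reidx_eq (fmap q f)))) as [w0 [Ew0q Ew0]].
  { rewrite cmp_idr. symmetry. apply clift_over. }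
  destruct (cast_hom (a := q (chi N c)) (b := q (reindex q (fmap q f))) (idm (q (chi N c)))
              eq_refl (reidx_eq (fmap q f))) as [h0 Eh0].
  destruct (cart_lift (Z := chi N c) (g := f) (h := h0) (clift_cart (f:=q) (s:=fmap q f)) eq_refl)
    as [w0' [Ew0q' Ew0']].
  { transitivity (arr (cmp (fmap q f) (idm (q (chi N c))))). apply arr_cmp; auto. apply clift_over.
    rewrite cmp_idr. reflexivity. }
  assert (I1 : cmp w0 w0' = idm _).
  { apply (cart_uniq Hf).
    - rewrite cmp_assoc, Ew0, Ew0', cmp_idr. reflexivity.
    - rewrite fmap_cmp, fmap_id. transitivity (arr (cmp (idm (q (chi N c))) (idm (q (chi N c))))).
      apply arr_cmp; [rewrite Ew0q'; exact Eh0| exact Ew0q]. rewrite cmp_idl; reflexivity. }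
  assert (I2 : cmp w0' w0 = idm _).
  { apply (cart_uniq (clift_cart (f:=q) (s:=fmap q f))).
    - rewrite cmp_assoc, Ew0', Ew0, cmp_idr. reflexivity.
    - rewrite fmap_cmp, fmap_id. 
      transitivity (arr (cmp (idm (q (chi N c))) (idm (q (chi N c))))).
      apply arr_cmp; [exact Ew0q| rewrite Ew0q'; exact Eh0]. rewrite cmp_idl.
      apply arr_id_eq. symmetry. apply reidx_eq. }
  assert (Hw0 : cartesian q w0) by exact (iso_cart I1 I2).
  destruct (DFe Hw0) as [c1 [v0 [Hv0 [Ev0 _]]]].
  destruct (DFe_iso Hv0 Ev0 I1 I2) as [v0' [Hv0' [Ea Eb]]].
  pose (y := exist _ c1 (arr_dom Ev0) : chibar N sl).
  destruct (Surj sl y) as [gs Egs].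
  pose proof (Nat sl Rs gs ids) as Nt. rewrite Eids, Egs in Nt.
  destruct Nt as [w1 [Ec1 [Eq1 [v1 [Hv1 Ev1]]]]].
  change (hom c1 R) in v1. simpl in Ec1, Eq1.
  assert (M : cmp e (fmap (chi N) v1) = cmp f (fmap (chi N) v0)).
  { apply arr_inj. transitivity (arr (cmp (clift q rho) w1)). apply arr_cmp; auto.
    transitivity (arr (clift q (fmap q f))). exact (f_equal (fun k => arr k) Ec1).
    rewrite <- Ew0. symmetry. apply arr_cmp; auto. }
  assert (K : forall g'' : hom c1 R, cartesian (nfib N) g'' ->
             cmp e (fmap (chi N) g'') = cmp f (fmap (chi N) v0) -> g'' = v1).
  { intros g'' Hg'' Eg''.
    assert (EQa : q (chi N c) = q (chi N c1)).
    { rewrite (arr_dom Ev0). symmetry. apply reidx_eq. }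
    assert (EQb : q (chi N R) = I0). { rewrite HR. apply reidx_eq. }
    destruct (cast_hom (a := q (chi N c)) (b := I0) (fmap q (fmap (chi N) g'')) EQa (eq_sym EQb)) as [u' Eu'].
    assert (Efv : arr (cmp f (fmap (chi N) v0)) = arr (clift q (fmap q f))).
    { rewrite <- Ew0. apply arr_cmp; auto. }
    assert (Hu' : cmp rho u' = fmap q f).
    { apply arr_inj. transitivity (arr (cmp (fmap q e) (fmap q (fmap (chi N) g'')))).
      { apply arr_cmp; auto. transitivity (arr (fmap q (clift q rho))).
        symmetry; apply clift_over. apply arr_fmap. symmetry; exact Ee. }
      rewrite <- fmap_cmp, Eg''. transitivity (arr (fmap q (clift q (fmap q f)))).
      apply arr_fmap; exact Efv. apply clift_over. }
    pose (gu := exist _ u' Hu' : slice_hom sl Rs).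
    pose proof (Nat sl Rs gu ids) as Nt. rewrite Eids in Nt.
    destruct Nt as [w2 [Ec2 [Eq2 [v2 [Hv2 Ev2]]]]].
    simpl in Ec2, Eq2.
    destruct (cast_hom (a := reindex q (fmap q f)) (b := reindex q rho) (fmap (chi N) g'')
               (eq_sym (arr_dom Ev0)) (eq_sym HR)) as [w3 Ew3].
    assert (E32 : w3 = w2).
    { apply (cart_uniq (clift_cart (f:=q) (s:=rho))).
      - apply arr_inj. transitivity (arr (cmp e (fmap (chi N) g''))).
        apply arr_cmp; auto. rewrite Eg'', Efv. exact (f_equal (fun k => arr k) (eq_sym Ec2)).
      - transitivity (arr (fmap q (fmap (chi N) g''))). apply arr_fmap; auto.
        rewrite Eq2. symmetry; exact Eu'. }
    subst w3.
    destruct (DFe_uniq Hg'' Hv2) as [Ec1' _].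
    { transitivity (arr w2). symmetry; exact Ew3. symmetry; exact Ev2. }
    assert (Egu : gu = gs).
    { apply Inj. rewrite Egs. apply sig_eq_hprop. simpl. symmetry. exact Ec1'. }
    assert (E21 : w2 = w1).
    { apply (cart_uniq (clift_cart (f:=q) (s:=rho))).
      - transitivity (clift q (fmap q f)); [exact Ec2 | symmetry; exact Ec1].
      - transitivity (arr u'); [exact Eq2|]. transitivity (arr (proj1_sig gs)); [rewrite <- Egu; reflexivity | symmetry; exact Eq1]. }
    subst w2.
    destruct (DFe_uniq Hg'' Hv1) as [_ Ef].
    { transitivity (arr w1). symmetry; exact Ew3. symmetry; exact Ev1. }
    apply arr_inj; exact Ef. }
  exists (cmp v1 v0'). split; [exact (cartesian_cmp Hv1 Hv0')|]. split.
  - rewrite fmap_cmp, cmp_assoc, M, <- cmp_assoc, <- fmap_cmp, Ea, fmap_id, cmp_idr. reflexivity.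
  - intros g' Hg' Eg'.
    rewrite <- (K (cmp g' v0)).
    + rewrite <- cmp_assoc, Ea, cmp_idr. reflexivity.
    + exact (cartesian_cmp Hg' Hv0).
    + rewrite fmap_cmp, cmp_assoc, Eg'. reflexivity.
Qed.
End Dir2.

Theorem mainTheorem4 (B E D : Category) (q : Fibration E B)
  (N : NotionOfStructure D q) :
  ((forall X : E, representable N X) <-> has_right_adjoint (CartChi N)) /\
  (has_right_adjoint (CartChi N) <-> comonadic (CartChi N)).
Proof.
  split; split.
  - intros H. apply UA_adj. intros X. apply UA_UAe. apply rep_UAe. apply H.
  - intros H X. destruct (proj1 (UA_UAe N X) (adj_UA H X)) as [R [e [He U]]].
    eapply Rs_rep; eauto.
  - intros [R [eta [eps adj]]]. exists R, eta, eps, adj.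
    apply comonadic_of_adj. exact (@chi_discrete B E D q N).
  - intros [R [eta [eps [adj _]]]]. exists R, eta, eps. exact adj.
Qed.
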